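(* Let $1\le M\le N$, let $\mathbf{H}$ be a complex $N\times M$ matrix of full column rank, and let $\mathbf{H}^{-\mathtt{H}}=\mathbf{H}(\mathbf{H}^{\mathtt{H}}\mathbf{H})^{-1}$. Let $\mathbf{B}=[\mathbf{b}_1,\dots,\mathbf{b}_M]=\mathbf{H}^{-\mathtt{H}}\mathbf{U}$, with $\mathbf{U}$ an $M\times M$ unimodular matrix over $\mathbb{Z}[i]$, be an LLL-reduced basis of the lattice generated by $\mathbf{H}^{-\mathtt{H}}$, let $\delta$ be its orthogonality defect, and write $\mathbf{B}^{-\mathtt{H}}=\mathbf{B}(\mathbf{B}^{\mathtt{H}}\mathbf{B})^{-1}=[\mathbf{a}_1,\dots,\mathbf{a}_M]$. Suppose $\mathbf{y}=\mathbf{H}\mathbf{x}+\mathbf{w}$ with $\mathbf{x}\in\mathbb{Z}[i]^M$ and $\mathbf{w}\in\mathbb{C}^N$. If $$\|\mathbf{w}\|<\frac{\min\{\|\mathbf{a}_1\|,\dots,\|\mathbf{a}_M\|\}}{2\sqrt{M\delta}},$$ then the LLL-aided (type I) decoder correctly decodes, i.e. $\widehat{\mathbf{x}}=\mathbf{x}$.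
   Context: $(\cdot)^{\mathtt{H}}$ is the conjugate transpose; $\mathbb{Z}[i]$ is the ring of Gaussian integers; a unimodular matrix is a matrix with entries in $\mathbb{Z}[i]$ whose inverse also has entries in $\mathbb{Z}[i]$. The lattice generated by an $N\times M$ matrix $\mathbf{G}$ of full column rank is $\{\mathbf{G}\mathbf{z}:\mathbf{z}\in\mathbb{Z}[i]^M\}$. The orthogonality defect of $\mathbf{B}=[\mathbf{b}_1,\dots,\mathbf{b}_M]$ is $\delta=\|\mathbf{b}_1\|^2\cdots\|\mathbf{b}_M\|^2/\det(\mathbf{B}^{\mathtt{H}}\mathbf{B})$. A basis is LLL-reduced in the sense of the Lenstra–Lenstra–Lovász reduction (extended to complex lattices over $\mathbb{Z}[i]$): with Gram–Schmidt vectors $\mathbf{b}_k^*$ and coefficients $\mu_{k,j}=\langle\mathbf{b}_k,\mathbf{b}_j^*\rangle/\|\mathbf{b}_j^*\|^2$, one has $|\mathrm{Re}\,\mu_{k,j}|,|\mathrm{Im}\,\mu_{k,j}|\le 1/2$ for $j<k$ and $\|\mathbf{b}_k^*\|^2\ge(3/4-|\mu_{k,k-1}|^2)\|\mathbf{b}_{k-1}^*\|^2$. The LLL-aided (type I) decoder computes $\tilde{\mathbf{x}}$ as the closest point of $\mathbb{Z}[i]^M$ to $\mathbf{B}^{\mathtt{H}}\mathbf{y}$ (componentwise rounding of real and imaginary parts) and outputs $\widehat{\mathbf{x}}=\mathbf{U}^{-\mathtt{H}}\tilde{\mathbf{x}}$. *)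

(* Defs.v *)
From HB Require Import structures.
From mathcomp Require Import all_boot all_order all_algebra.
From mathcomp Require Import reals.
From mathcomp Require Import complex.
Set Implicit Arguments. Unset Strict Implicit. Unset Printing Implicit Defensive.
Import Order.TTheory GRing.Theory Num.Theory.
Local Open Scope ring_scope.
Local Open Scope complex_scope.

Section Defs.
Variable R : realType.
Local Notation C := R[i].

Definition gaussian (z : C) : bool :=
  ((complex.Re z : R) \is a Num.int) && ((complex.Im z : R) \is a Num.int).
Definition gauss_mx m n (A : 'M[C]_(m, n)) : Prop :=
  forall i j, gaussian (A i j).

Definition ctmx m n (A : 'M[C]_(m, n)) : 'M[C]_(n, m) := (map_mx (@conjc R) A)^T.

Definition unimodular n (U : 'M[C]_n) : Prop :=
  gauss_mx U /\ U \in unitmx /\ gauss_mx (invmx U).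

Definition pinvH m n (A : 'M[C]_(m, n)) : 'M[C]_(m, n) := A *m invmx (ctmx A *m A).

Definition cdot n (u v : 'cV[C]_n) : C := \sum_i u i 0 * (v i 0)^*.
Definition sqnorm n (v : 'cV[C]_n) : R := \sum_i (complex.Re (v i 0) ^+ 2 + complex.Im (v i 0) ^+ 2).
Definition vnorm n (v : 'cV[C]_n) : R := Num.sqrt (sqnorm v).

Definition gs_step n (acc : seq 'cV[C]_n) (b : 'cV[C]_n) : seq 'cV[C]_n :=
  rcons acc (b - \sum_(v <- acc) (cdot b v / cdot v v) *: v).
Definition gram_schmidt n (bs : seq 'cV[C]_n) : seq 'cV[C]_n := foldl (@gs_step n) [::] bs.

Definition gs_vec n m (B : 'M[C]_(n, m)) (k : nat) : 'cV[C]_n :=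
  nth 0 (gram_schmidt [seq col j B | j <- enum 'I_m]) k.

Definition gs_mu n m (B : 'M[C]_(n, m)) (k j : 'I_m) : C :=
  cdot (col k B) (gs_vec B j) / cdot (gs_vec B j) (gs_vec B j).

Definition cabs2 (z : C) : R := complex.Re z ^+ 2 + complex.Im z ^+ 2.

Definition LLL_reduced n m (B : 'M[C]_(n, m)) : Prop :=
  (forall k j : 'I_m, (j < k)%N ->
      `|complex.Re (gs_mu B k j)| <= 1/2 /\ `|complex.Im (gs_mu B k j)| <= 1/2) /\
  (forall (k j : 'I_m), nat_of_ord k = j.+1 ->
      sqnorm (gs_vec B k) >= (3/4 - cabs2 (gs_mu B k j)) * sqnorm (gs_vec B j)).

(* orthogonality defect ||b_1||^2...||b_M||^2 / det(B^H B); the determinant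
   of the Gram matrix is real (positive), we take its real part. *)
Definition orth_defect n m (B : 'M[C]_(n, m)) : R :=
  (\prod_(j < m) sqnorm (col j B)) / complex.Re (\det (ctmx B *m B)).

Definition round_r (x : R) : R := (Num.floor (x + 1/2))%:~R.
Definition round_c (z : C) : C := round_r (complex.Re z) +i* round_r (complex.Im z).

Definition lll_decode n m (B : 'M[C]_(n, m)) (U : 'M[C]_m) (y : 'cV[C]_n) : 'cV[C]_m :=
  invmx (ctmx U) *m \col_i round_c ((ctmx B *m y) i 0).

Definition min_col_norm n m (A : 'M[C]_(n, m)) : R :=
  let s := [seq vnorm (col j A) | j <- enum 'I_m] in
  \big[Num.min/head 0 s]_(v <- s) v.

End Defs.

(* Main.v *)
Set Warnings "-notation-overridden,-ambiguous-paths".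
Require Import Defs.
From HB Require Import structures.
From mathcomp Require Import all_boot all_order all_algebra.
From mathcomp Require Import reals.
From mathcomp Require Import complex.
From mathcomp Require Import ring lra.
Import Order.TTheory GRing.Theory Num.Theory.
Local Open Scope ring_scope.
Local Open Scope complex_scope.



Lemma ctmxE {R : realType} m n (A : 'M[R[i]]_(m, n)) i j : ctmx A i j = conjc (A j i).
Proof. by rewrite /ctmx !mxE. Qed.

Lemma ctmx_mul {R : realType} m n p (A : 'M[R[i]]_(m, n)) (B : 'M[R[i]]_(n, p)) :
  ctmx (A *m B) = ctmx B *m ctmx A.
Proof. by rewrite /ctmx map_mxM trmx_mul. Qed.

Lemma ctmxK {R : realType} m n (A : 'M[R[i]]_(m, n)) : ctmx (ctmx A) = A.
Proof. by apply/matrixP=> i j; rewrite /ctmx !mxE conjcK. Qed.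

Lemma ctmxD {R : realType} m n (A B : 'M[R[i]]_(m, n)) : ctmx (A + B) = ctmx A + ctmx B.
Proof. by apply/matrixP=> i j; rewrite /ctmx !mxE rmorphD. Qed.

Lemma ctmxN {R : realType} m n (A : 'M[R[i]]_(m, n)) : ctmx (- A) = - ctmx A.
Proof. by apply/matrixP=> i j; rewrite /ctmx !mxE rmorphN. Qed.

Lemma ctmxZ {R : realType} m n (a : R[i]) (A : 'M[R[i]]_(m, n)) : ctmx (a *: A) = conjc a *: ctmx A.
Proof. by apply/matrixP=> i j; rewrite /ctmx !mxE rmorphM. Qed.

Lemma ctmx_inv {R : realType} n (A : 'M[R[i]]_n) : ctmx (invmx A) = invmx (ctmx A).
Proof. by rewrite /ctmx map_invmx trmx_inv. Qed.

Lemma det_ctmx {R : realType} n (A : 'M[R[i]]_n) : \det (ctmx A) = conjc (\det A).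
Proof. by rewrite /ctmx det_tr det_map_mx. Qed.

Lemma conjc_mul {R : realType} (z : R[i]) : conjc z * z = (cabs2 z)%:C.
Proof. by case: z => a b; rewrite /cabs2 /=; congr Complex; ring. Qed.

Lemma cabs2_ge0 {R : realType} (z : R[i]) : 0 <= cabs2 z.
Proof. by rewrite /cabs2 addr_ge0 // sqr_ge0. Qed.

Lemma conjc_mul_ge0 {R : realType} (z : R[i]) : 0 <= conjc z * z.
Proof. by rewrite conjc_mul ler0c cabs2_ge0. Qed.

Lemma gram_diag_ge0 {R : realType} m n (B : 'M[R[i]]_(m, n)) j : 0 <= (ctmx B *m B) j j.
Proof. rewrite mxE; apply: sumr_ge0 => i _; rewrite ctmxE; exact: conjc_mul_ge0. Qed.

Lemma sqnormE {R : realType} m (v : 'cV[R[i]]_m) : (sqnorm v)%:C = (ctmx v *m v) 0 0.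
Proof.
rewrite /sqnorm mxE rmorph_sum; apply: eq_bigr => i _.
by rewrite ctmxE conjc_mul.
Qed.

Lemma gram_col {R : realType} m n (B : 'M[R[i]]_(m, n)) j k :
  (ctmx B *m B) j k = (ctmx (col j B) *m col k B) 0 0.
Proof. by rewrite !mxE; apply: eq_bigr => i _; rewrite !ctmxE !mxE. Qed.



Lemma gram_schur {R : realType} {N n} (b : 'cV[R[i]]_N) (B' : 'M[R[i]]_(N, n)) :
  (ctmx b *m b) 0 0 != 0 ->
  ctmx (B' - ((ctmx b *m b) 0 0)^-1 *: (b *m (ctmx b *m B'))) *m
       (B' - ((ctmx b *m b) 0 0)^-1 *: (b *m (ctmx b *m B')))
  = ctmx B' *m B' - ((ctmx b *m b) 0 0)^-1 *: (ctmx B' *m b *m (ctmx b *m B')).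
Proof.
set a := (ctmx b *m b) 0 0 => a0.
have ca : conjc a = a by rewrite /a -sqnormE conjc_real.
have ba : ctmx b *m b = a%:M by rewrite {1}[ctmx b *m b]mx11_scalar.
rewrite ctmxD ctmxN ctmxZ ctmx_mul ctmx_mul ctmxK conjc_inv ca.
rewrite mulmxBl !mulmxBr -!scalemxAl -!scalemxAr !scalerA !mulmxA.
rewrite -[ctmx B' *m b *m ctmx b *m b]mulmxA ba mul_mx_scalar -!scalemxAl scalerA.
have -> : a^-1 * a^-1 * a = a^-1 by rewrite -mulrA mulVf // mulr1.
set Z := _ *m ctmx b *m B'.
by rewrite subrr subr0.
Qed.



Lemma ctmx_row_mx {R : realType} N n1 n2 (A : 'M[R[i]]_(N, n1)) (B : 'M[R[i]]_(N, n2)) :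
  ctmx (row_mx A B) = col_mx (ctmx A) (ctmx B).
Proof. by rewrite /ctmx map_row_mx tr_row_mx. Qed.

Lemma block_diag0 {R : realType} n (Aul : 'M[R[i]]_1) Aur Adl (Adr : 'M[R[i]]_n) :
  (block_mx Aul Aur Adl Adr : 'M_(1 + n)) ord0 ord0 = Aul 0 0.
Proof.
have -> : (ord0 : 'I_(1 + n)) = lshift n (0 : 'I_1) by apply: val_inj.
by rewrite block_mxEul.
Qed.

Lemma block_diagS {R : realType} n (Aul : 'M[R[i]]_1) Aur Adl (Adr : 'M[R[i]]_n) j :
  (block_mx Aul Aur Adl Adr : 'M_(1 + n)) (lift ord0 j) (lift ord0 j) = Adr j j.
Proof.
have -> : (lift ord0 j : 'I_(1 + n)) = rshift 1 j by apply: val_inj.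
by rewrite block_mxEdr.
Qed.

Lemma gram_eq0 {R : realType} {N} (b : 'cV[R[i]]_N) : (ctmx b *m b) 0 0 = 0 -> b = 0.
Proof.
rewrite mxE => h; apply/matrixP => i j; rewrite (ord1 j) mxE.
have nn : forall k : 'I_N, true -> 0 <= ctmx b 0 k * b k 0.
  by move=> k _; rewrite ctmxE; exact: conjc_mul_ge0.
have /eqP := psumr_eq0P nn h (i:=i) isT.
by rewrite ctmxE mulf_eq0 conjc_eq0 orbb => /eqP.
Qed.



Lemma hadamard {R : realType} n : forall N (B : 'M[R[i]]_(N, n)),
  0 <= \det (ctmx B *m B) <= \prod_j (ctmx B *m B) j j.
Proof.
elim: n => [|n IH] N B.
  by rewrite det_mx00 big_ord0 lexx ler01.
have -> : B = row_mx (lsubmx (B : 'M_(N, 1 + n))) (rsubmx (B : 'M_(N, 1 + n))).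
  by rewrite hsubmxK.
move: (lsubmx _) (rsubmx _) => b B'.
rewrite -[n.+1]/(1+n)%N.
rewrite ctmx_row_mx mul_col_row big_ord_recl block_diag0.
under eq_bigr do rewrite block_diagS.
set a := (ctmx b *m b) 0 0.
have a_ge0 : 0 <= a by rewrite /a gram_diag_ge0.
have pge0 : 0 <= \prod_(i < n) (ctmx B' *m B') i i.
  by apply: prodr_ge0 => i _; apply: gram_diag_ge0.
have [a0|an0] := eqVneq a 0.
  have b0 := @gram_eq0 _ _ b a0.
  rewrite a0 mul0r b0 /ctmx map_mx0 trmx0 !mul0mx mulmx0 -/(ctmx _).
  by rewrite det_ublock det_mx11 mxE mul0r lexx.
have a_gt0 : 0 < a by rewrite lt_def an0.
pose L : 'M[R[i]]_(1 + n) := block_mx 1%:M 0 (- a^-1 *: (ctmx B' *m b)) 1%:M.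
have detL : \det L = 1 by rewrite det_lblock !det1 mulr1.
set G := block_mx _ _ _ _.
have -> : \det G = \det (L *m G) by rewrite det_mulmx detL mul1r.
rewrite /G /L mulmx_block !mul1mx !mul0mx !addr0 ?add0r.
have ba : ctmx b *m b = a%:M by rewrite {1}[ctmx b *m b]mx11_scalar.
rewrite !ba mul_mx_scalar scalerA mulrN mulfV // scaleN1r addNr.
rewrite -scalemxAl scaleNr addrC -(@gram_schur _ _ _ b B' an0).
rewrite det_ublock det_scalar1.
set P := (B' - _).
have [IH1 IH2] := andP (IH _ P).
rewrite mulr_ge0 //=.
apply: le_trans (ler_wpM2l a_ge0 IH2) _.
rewrite ler_wpM2l //; apply: ler_prod => j _.
rewrite gram_diag_ge0 /= (@gram_schur _ _ _ b B' an0) mxE -/a mxE gerDl mxE oppr_le0 mxE.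
rewrite mulr_ge0 // ?invr_ge0 // mxE big_ord1.
rewrite -[ctmx B' *m b]ctmxK ctmx_mul ctmxK ctmxE.
exact: conjc_mul_ge0.
Qed.



Lemma mxBE {T : pzRingType} m n (A B : 'M[T]_(m, n)) i j : (A - B) i j = A i j - B i j.
Proof. by rewrite !mxE. Qed.
Lemma mxZE {T : pzRingType} m n a (A : 'M[T]_(m, n)) i j : (a *: A) i j = a * A i j.
Proof. by rewrite !mxE. Qed.
Lemma mul11E {T : pzRingType} m n (X : 'M[T]_(m, 1)) (Y : 'M[T]_(1, n)) i j :
  (X *m Y) i j = X i 0 * Y 0 j.
Proof. by rewrite mxE big_ord1. Qed.

Lemma cauchy_schwarz {R : realType} N (v w : 'cV[R[i]]_N) :
  cabs2 ((ctmx v *m w) 0 0) <= sqnorm v * sqnorm w.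
Proof.
have [a0|an0] := eqVneq ((ctmx v *m v) 0 0) 0.
  rewrite (gram_eq0 _ a0) /ctmx map_mx0 trmx0 mul0mx mxE /cabs2 /=.
  by rewrite expr0n /= addr0 mulr_ge0 // ?(sumr_ge0) // => i _; rewrite addr_ge0 // sqr_ge0.
have := @gram_diag_ge0 _ _ _ (w - ((ctmx v *m v) 0 0)^-1 *: (v *m (ctmx v *m w))) 0.
rewrite (gram_schur _ _ an0) mxBE mxZE mul11E subr_ge0.
rewrite -[ctmx w *m v]ctmxK ctmx_mul ctmxK ctmxE conjc_mul -!sqnormE.
have sv : 0 < sqnorm v.
  rewrite lt_def; apply/andP; split; last first.
    by rewrite /sqnorm sumr_ge0 // => i _; rewrite addr_ge0 // sqr_ge0.
  by apply: contra an0 => /eqP h; rewrite -sqnormE h.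
rewrite -rmorphV ?unitfE ?gt_eqF // -rmorphM lecR.
by move=> h; have := ler_wpM2l (ltW sv) h; rewrite mulrA mulfV ?gt_eqF // mul1r.
Qed.



Lemma round_r_int {R : realType} (p t : R) : p \is a Num.int -> `|t| < 1/2 ->
  round_r (p + t) = p.
Proof.
move=> pi ht; rewrite /round_r -addrA addrC floorDrz //.
have -> : Num.floor (t + 1/2) = 0.
  apply: floor_def; rewrite add0r.
  move: ht; rewrite ltr_norml => /andP [h1 h2]; apply/andP; split; rewrite /=; lra.
by rewrite add0r floorK.
Qed.

Lemma round_c_gauss {R : realType} (g e : R[i]) : gaussian g ->
  `|complex.Re e| < 1/2 -> `|complex.Im e| < 1/2 -> round_c (g + e) = g.
Proof.
case: g => a b; case: e => c d; rewrite /gaussian /= => /andP [ai bi] hc hd.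
by rewrite /round_c /= !round_r_int.
Qed.

Lemma gaussian0 {R : realType} : gaussian (0 : R[i]).
Proof. by apply/andP; split; apply: rpred0. Qed.

Lemma gaussianD {R : realType} (x y : R[i]) : gaussian x -> gaussian y -> gaussian (x + y).
Proof.
case: x => a b; case: y => c d; rewrite /gaussian /= => /andP [? ?] /andP [? ?].
by rewrite ?(rpredD, rpredB, rpredM, rpredN).
Qed.

Lemma gaussianM {R : realType} (x y : R[i]) : gaussian x -> gaussian y -> gaussian (x * y).
Proof.
case: x => a b; case: y => c d; rewrite /gaussian /= => /andP [? ?] /andP [? ?].
by rewrite ?(rpredD, rpredB, rpredM, rpredN).
Qed.

Lemma gaussianJ {R : realType} (x : R[i]) : gaussian x -> gaussian (conjc x).
Proof. case: x => a b; rewrite /gaussian /= => /andP [h1 h2].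
by rewrite h1 rpredN h2.
Qed.

Lemma gaussian_ctmx_mul {R : realType} m n (U : 'M[R[i]]_(m, n)) (x : 'cV[R[i]]_m) :
  gauss_mx U -> gauss_mx x -> forall k, gaussian ((ctmx U *m x) k 0).
Proof.
move=> gU gx k; rewrite mxE; apply: (big_ind (fun z : R[i] => is_true (gaussian z))) => //.
  exact: gaussian0.
  exact: gaussianD.
by move=> i _; rewrite ctmxE gaussianM ?gaussianJ.
Qed.

Lemma bigmin_le {R : realType} (s : seq R) d y : y \in s -> \big[Num.min/d]_(v <- s) v <= y.
Proof.
elim: s => //= a s IH; rewrite inE big_cons => /orP [/eqP -> | ys].
  by rewrite ge_min lexx.
by rewrite ge_min (IH ys) orbT.
Qed.

Lemma bigmin_ge0 {R : realType} (s : seq R) d : (forall y, y \in s -> 0 <= y) -> 0 <= d ->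
  0 <= \big[Num.min/d]_(v <- s) v.
Proof.
elim: s => [|a s IH] h d0; first by rewrite big_nil.
rewrite big_cons le_min h ?mem_head //= IH // => y ys.
by apply: h; rewrite inE ys orbT.
Qed.

Lemma min_col_norm_le {R : realType} n m (A : 'M[R[i]]_(n, m)) k :
  min_col_norm A <= vnorm (col k A).
Proof. by apply: bigmin_le; apply: map_f; rewrite mem_enum. Qed.

Lemma min_col_norm_ge0 {R : realType} n m (A : 'M[R[i]]_(n, m)) :
  0 <= min_col_norm A.
Proof.
rewrite /min_col_norm; apply: bigmin_ge0.
  by move=> y /mapP [j _ ->]; rewrite /vnorm sqrtr_ge0.
case: (enum 'I_m) => //= j _; by rewrite /vnorm sqrtr_ge0.
Qed.

Lemma arith {R : realType} (E sb sa sw m d Mr : R) : 0 <= sb -> 0 <= sw -> 0 <= sa ->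
  1 <= Mr -> 0 <= m -> m <= Num.sqrt sa -> E <= sb * sw -> sb * sa <= d ->
  Num.sqrt sw < m / (2 * Num.sqrt (Mr * d)) -> E < 1/4.
Proof.
move=> sb0 sw0 sa0 M1 m0 msa Esw sbd hw.
have D0 : 0 < 2 * Num.sqrt (Mr * d).
  rewrite lt_def mulr_ge0 ?sqrtr_ge0 // andbT; apply/negP => /eqP D0.
  by move: hw; rewrite D0 invr0 mulr0 ltNge sqrtr_ge0.
have Md : 0 < Mr * d.
  by move: D0; rewrite pmulr_rgt0 // sqrtr_gt0.
have d0 : 0 < d by move: Md; rewrite pmulr_rgt0 //; lra.
set s := Num.sqrt (Mr * d).
have s0 : 0 < s by rewrite sqrtr_gt0.
have ss : s * s = Mr * d.
  by rewrite -expr2 /s; apply: sqr_sqrtr; apply: ltW.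
have hw' : Num.sqrt sw * (2 * s) < m by rewrite -ltr_pdivlMr.
have X0 : 0 <= Num.sqrt sw * (2 * s) by rewrite mulr_ge0 ?sqrtr_ge0 // ltW.
have h1 : sw * (4 * (s * s)) < m * m.
  have := ltr_pM X0 X0 hw' hw'.
  have -> : Num.sqrt sw * (2 * s) * (Num.sqrt sw * (2 * s)) = (Num.sqrt sw * Num.sqrt sw) * (4 * (s * s)) by ring.
  by rewrite -expr2 sqr_sqrtr.
have h2 : m * m <= sa.
  have := ler_pM m0 m0 msa msa.
  by rewrite -[Num.sqrt sa * _]expr2 sqr_sqrtr.
rewrite ss in h1.
have [sbz|sbp] := eqVneq sb 0.
  move: Esw; rewrite sbz mul0r => E0; lra.
have sbp' : 0 < sb by rewrite lt_def sbp sb0.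
have h3 : sb * (sw * (4 * (Mr * d))) < sb * sa.
  by apply: lt_le_trans (ler_wpM2l sb0 h2); rewrite ltr_pM2l.
have h4 : E * (4 * (Mr * d)) <= sb * sw * (4 * (Mr * d)).
  by rewrite ler_wpM2r // mulr_ge0 // ltW.
have h5 : E * (4 * (Mr * d)) < d.
  apply: le_lt_trans h4 _; rewrite -mulrA; exact: lt_le_trans h3 sbd.
have [E0|E0] := leP E 0; first lra.
have h6 : E * (4 * d) <= E * (4 * (Mr * d)).
  apply: ler_wpM2l; first exact: ltW.
  apply: ler_wpM2l => //; rewrite -[X in X <= _]mul1r; apply: ler_wpM2r => //; exact: ltW.
have h7 : E * 4 * d < 1 * d by rewrite mul1r -mulrA; exact: le_lt_trans h6 h5.
rewrite ltr_pM2r // in h7; lra.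
Qed.



Lemma mxDE {T : pzRingType} m n (A B : 'M[T]_(m, n)) i j : (A + B) i j = A i j + B i j.
Proof. by rewrite !mxE. Qed.


Lemma norm_lt_half {R : realType} (x : R) : x ^+ 2 < 1/4 -> `|x| < 1/2.
Proof.
move=> h; rewrite ltNge; apply/negP => h2.
have h0 : 0 <= (1/2 : R) by lra.
have := ler_pM h0 h0 h2 h2; rewrite -[`|x| * _]expr2 real_normK ?num_real // => h3; lra.
Qed.

Lemma ctmx_col_mul {R : realType} N m (B : 'M[R[i]]_(N, m)) (w : 'cV[R[i]]_N) k :
  (ctmx B *m w) k 0 = (ctmx (col k B) *m w) 0 0.
Proof. by rewrite !mxE; apply: eq_bigr => i _; rewrite /ctmx !mxE. Qed.

Theorem lemma2 (R : realType) (N M : nat) (H : 'M[R[i]]_(N, M))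
    (U : 'M[R[i]]_M) (x : 'cV[R[i]]_M) (w : 'cV[R[i]]_N) :
  (1 <= M)%N -> (M <= N)%N ->
  \rank H = M ->
  unimodular U ->
  LLL_reduced (pinvH H *m U) ->
  gauss_mx x ->
  vnorm w < min_col_norm (pinvH (pinvH H *m U)) /
              (2 * Num.sqrt (M%:R * orth_defect (pinvH H *m U))) ->
  lll_decode (pinvH H *m U) U (H *m x + w) = x.
Proof.
move=> M1 MN rkH [Ug [Uu _]] _ xg.
have [K KE] : exists K, K = ctmx H *m H by eexists.
have KH : ctmx K = K by rewrite KE ctmx_mul ctmxK.
have Ku : K \in unitmx.
  rewrite unitmxE unitfE; apply/negP => /det0P [v vn0 vK].
  have u0 : v *m ctmx H = 0.
    have h : (ctmx (ctmx (v *m ctmx H)) *m ctmx (v *m ctmx H)) 0 0 = 0.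
      by rewrite ctmxK [X in _ *m X]ctmx_mul ctmxK mulmxA -(mulmxA v) -KE vK mul0mx mxE.
    by rewrite -[v *m _]ctmxK (gram_eq0 _ h) /ctmx map_mx0 trmx0.
  have Hv : H *m ctmx v = 0.
    by rewrite -[H *m _]ctmxK ctmx_mul ctmxK u0 /ctmx map_mx0 trmx0.
  have : row_full H by rewrite /row_full rkH.
  case/row_fullP => X XH.
  have cv : ctmx v = 0 by rewrite -[ctmx v]mul1mx -XH -mulmxA Hv mulmx0.
  by move: vn0; rewrite -[v]ctmxK cv /ctmx map_mx0 trmx0 eqxx.
have [B BE] : exists B, B = pinvH H *m U by eexists.
rewrite -BE.
have Uc : ctmx U \in unitmx by rewrite unitmxE det_ctmx unitfE conjc_eq0 -unitfE -unitmxE.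
have BH : ctmx B *m H = ctmx U.
  by rewrite BE /pinvH -KE !ctmx_mul ctmx_inv KH -!mulmxA -KE mulVmx // mulmx1.
have [G GE] : exists G, G = ctmx B *m B by eexists.
have GE2 : G = ctmx U *m invmx K *m U.
  by rewrite GE {2}BE /pinvH -KE !mulmxA BH.
have Gu : G \in unitmx by rewrite GE2 !unitmx_mul Uc unitmx_inv Ku Uu.
have GH : ctmx G = G by rewrite GE ctmx_mul ctmxK.
have [dG0 dGle] := andP (@hadamard _ _ _ B); rewrite -GE in dG0 dGle.
have detG0 : \det G != 0 by rewrite -unitfE -unitmxE.
have detGp : 0 < \det G by rewrite lt_def detG0.
have AA : ctmx (pinvH B) *m pinvH B = invmx G.
  rewrite /pinvH -GE ctmx_mul ctmx_inv GH !mulmxA -(mulmxA (invmx G)) -GE.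
  by rewrite mulVmx // mul1mx.
have KEY : forall k, sqnorm (col k B) * sqnorm (col k (pinvH B)) <= orth_defect B.
  move=> k.
  have saC : (sqnorm (col k (pinvH B)))%:C = (invmx G) k k by rewrite sqnormE -gram_col AA.
  have sbC : forall j, (sqnorm (col j B))%:C = G j j by move=> j; rewrite sqnormE -gram_col GE.
  have minor : row' k (col' k G) = ctmx (col' k B) *m col' k B.
    by apply/matrixP => i j; rewrite GE !mxE; apply: eq_bigr => l _; rewrite /ctmx !mxE.
  have invkk : (invmx G) k k = (\det G)^-1 * \det (ctmx (col' k B) *m col' k B).
    rewrite /invmx Gu !mxE /cofactor minor -signr_odd addnn odd_double expr0 mul1r.
    by [].
  have [dm0 dmle] := andP (@hadamard _ _ _ (col' k B)).
  have diagm : forall j, (ctmx (col' k B) *m col' k B) j j = G (lift k j) (lift k j).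
    by move=> j; rewrite GE !mxE; apply: eq_bigr => l _; rewrite /ctmx !mxE.
  have dmle' : \det (ctmx (col' k B) *m col' k B) <= \prod_(j < M.-1) G (lift k j) (lift k j).
    by under eq_bigr do rewrite -diagm.
  have prodG : \prod_j G j j = G k k * \prod_(j < M.-1) G (lift k j) (lift k j).
    by rewrite (bigD1_ord k).
  have Gkk0 : 0 <= G k k by rewrite GE gram_diag_ge0.
  have hC : G k k * (invmx G) k k <= (\det G)^-1 * \prod_j G j j.
    rewrite invkk mulrCA prodG; apply: ler_wpM2l; first by rewrite invr_ge0 ltW.
    exact: ler_wpM2l dmle'.
  have dR : ((complex.Re (\det G))%:C) = \det G by apply: RRe_real; apply: ger0_real.
  move: hC; rewrite -saC -sbC -rmorphM.
  under eq_bigr do rewrite -sbC.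
  rewrite -rmorph_prod -dR -fmorphV -rmorphM lecR /orth_defect -GE.
  by rewrite [(_)^-1 * _]mulrC.
move=> hw.
have small : forall k, cabs2 ((ctmx B *m w) k 0) < 1/4.
  move=> k; rewrite ctmx_col_mul.
  apply: (@arith _ _ (sqnorm (col k B)) (sqnorm (col k (pinvH B))) (sqnorm w)
            (min_col_norm (pinvH B)) (orth_defect B) (M%:R)).
  - by rewrite -(@ler0c R) sqnormE gram_diag_ge0.
  - by rewrite -(@ler0c R) sqnormE gram_diag_ge0.
  - by rewrite -(@ler0c R) sqnormE gram_diag_ge0.
  - by rewrite ler1n.
  - exact: min_col_norm_ge0.
  - exact: min_col_norm_le.
  - exact: cauchy_schwarz.
  - exact: KEY.
  - exact: hw.
rewrite /lll_decode.
have -> : \col_i round_c ((ctmx B *m (H *m x + w)) i 0) = ctmx U *m x.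
  apply/matrixP => i j; rewrite (ord1 j) mxE mulmxDr mulmxA BH mxDE.
  have := small i; rewrite /cabs2 => hs.
  apply: round_c_gauss; first exact: gaussian_ctmx_mul.
    by apply: norm_lt_half; apply: le_lt_trans hs; rewrite lerDl sqr_ge0.
  by apply: norm_lt_half; apply: le_lt_trans hs; rewrite lerDr sqr_ge0.
by rewrite mulKmx.
Qed.
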